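(* Let $S$ be an infinite commutative domain satisfying conditions (1) and (2) below, with a first-order structure expanding its ring structure. Extend the language by two unary predicate symbols $P_1,P_2$, and for $A,B\subseteq S$ let $S_{A,B}$ be the expansion in which $P_1$ is interpreted as $A$ and $P_2$ as $B$. Then there exists a first-order sentence $\Psi$ in this extended language such that: (i) if $A\subseteq B$ then $S_{A,B}\models\Psi$; (ii) if $A$ is finite and $B\subseteq S$ is arbitrary, then $S_{A,B}\models\Psi$ iff $|A|\le|B|$; (iii) if $A$ is infinite and $B$ is finite, then $S_{A,B}\not\models\Psi$. (1) For every finite $A\subseteq S$ there is $x\in S$, neither zero nor a unit, with $(x)+(a_i)=S$ for all $a_i\in A\setminus\{0\}$. (2) For every finite $A\subseteq S$ with $0\notin A$ and every $a\in S$ neither zero nor a unit, there is $g\in S$ such that each $1+a_ig$ ($a_i\in A$) is neither zero nor a unit, $(a)+(1+a_ig)=S$ for all $a_i\in A$, and $(1+a_ig)+(1+a_jg)=S$ for distinct $a_i,a_j\in A$. *)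

(* Defs.v *)
From HB Require Import structures.
From mathcomp Require Import all_boot all_order all_algebra.
Set Implicit Arguments. Unset Strict Implicit. Unset Printing Implicit Defensive.
Import Order.TTheory GRing.Theory Num.Theory.
Local Open Scope ring_scope.

(* Language: ring symbols 0,1,+,-,* ; extra function symbols F and extra
   relation symbols Rl (the arbitrary expansion of the ring structure);
   and the two new unary predicate symbols P1, P2. *)
Inductive term (F : Type) : Type :=
  | Tvar of nat
  | T0 | T1
  | Tadd of term F & term F
  | Topp of term F
  | Tmul of term F & term F
  | Tapp of F & list (term F).

Inductive formula (F Rl : Type) : Type :=
  | Fbot
  | Feq of term F & term F
  | Frel of Rl & list (term F)
  | FP1 of term F
  | FP2 of term F
  | Fnot of formula F Rl
  | Fand of formula F Rl & formula F Rl
  | For of formula F Rl & formula F Rl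
  | Fimp of formula F Rl & formula F Rl
  | Fall of nat & formula F Rl
  | Fex of nat & formula F Rl.

Arguments Tvar {F}. Arguments T0 {F}. Arguments T1 {F}.
Arguments Fbot {F Rl}.

Fixpoint tfv (F : Type) (t : term F) : seq nat :=
  match t with
  | Tvar n => [:: n]
  | T0 | T1 => [::]
  | Tadd t u | Tmul t u => tfv t ++ tfv u
  | Topp t => tfv t
  | Tapp _ ts => flatten (map (@tfv F) ts)
  end.

Fixpoint ffv (F Rl : Type) (p : formula F Rl) : seq nat :=
  match p with
  | Fbot => [::]
  | Feq t u => tfv t ++ tfv u
  | Frel _ ts => flatten (map (@tfv F) ts)
  | FP1 t | FP2 t => tfv t
  | Fnot q => ffv q
  | Fand q r | For q r | Fimp q r => ffv q ++ ffv r
  | Fall n q | Fex n q => filter (fun m => m != n) (ffv q)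
  end.

Definition sentence (F Rl : Type) (p : formula F Rl) : Prop := ffv p = [::].

Section Semantics.
Variables (S : idomainType) (F Rl : Type).
Variables (fI : F -> seq S -> S) (rI : Rl -> seq S -> Prop).

Fixpoint teval (e : nat -> S) (t : term F) : S :=
  match t with
  | Tvar n => e n
  | T0 => 0
  | T1 => 1
  | Tadd t u => teval e t + teval e u
  | Topp t => - teval e t
  | Tmul t u => teval e t * teval e u
  | Tapp f ts => fI f (map (teval e) ts)
  end.

Definition upd (e : nat -> S) (n : nat) (x : S) : nat -> S :=
  fun m => if m == n then x else e m.

Fixpoint holds (A B : S -> Prop) (e : nat -> S) (p : formula F Rl) : Prop :=
  match p with
  | Fbot => False
  | Feq t u => teval e t = teval e u
  | Frel r ts => rI r (map (teval e) ts)
  | FP1 t => A (teval e t)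
  | FP2 t => B (teval e t)
  | Fnot q => ~ holds A B e q
  | Fand q r => holds A B e q /\ holds A B e r
  | For q r => holds A B e q \/ holds A B e r
  | Fimp q r => holds A B e q -> holds A B e r
  | Fall n q => forall x : S, holds A B (upd e n x) q
  | Fex n q => exists x : S, holds A B (upd e n x) q
  end.

(* S_{A,B} |= p, for a sentence p (valuation irrelevant; we use the constant 0 one). *)
Definition models (A B : S -> Prop) (p : formula F Rl) : Prop :=
  holds A B (fun _ => 0) p.
End Semantics.

Definition finite_set (T : eqType) (A : T -> Prop) : Prop :=
  exists s : seq T, forall x, A x <-> x \in s.

Definition infinite_type (T : eqType) : Prop :=
  forall s : seq T, exists x : T, x \notin s.

Definition card_le (T : Type) (A B : T -> Prop) : Prop :=
  exists f : T -> T, (forall x, A x -> B (f x)) /\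
    (forall x y, A x -> A y -> f x = f y -> x = y).

Definition comaximal (S : idomainType) (x y : S) : Prop :=
  exists u v : S, u * x + v * y = 1.

Definition nonzero_nonunit (S : idomainType) (x : S) : Prop :=
  x != 0 /\ x \isn't a GRing.unit.

(* Condition (1); a finite subset of S is given by a list enumerating it. *)
Definition cond1 (S : idomainType) : Prop :=
  forall A : seq S, exists x : S, nonzero_nonunit x /\
    forall a, a \in A -> a != 0 -> comaximal x a.

Definition cond2 (S : idomainType) : Prop :=
  forall (A : seq S) (a : S), 0 \notin A -> nonzero_nonunit a ->
    exists g : S,
      (forall ai, ai \in A -> nonzero_nonunit (1 + ai * g) /\ comaximal a (1 + ai * g)) /\
      (forall ai aj, ai \in A -> aj \in A -> ai != aj ->
         comaximal (1 + ai * g) (1 + aj * g)).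

(* Main.v *)
Require Import Defs.
From mathcomp Require Import all_boot all_order all_algebra.
From mathcomp Require Import ring.
From Stdlib Require Import ClassicalEpsilon.
Set Implicit Arguments. Unset Strict Implicit. Unset Printing Implicit Defensive.
Import Order.TTheory GRing.Theory Num.Theory.
Local Open Scope ring_scope.

Arguments Feq {F Rl}. Arguments Frel {F Rl}. Arguments FP1 {F Rl}. Arguments FP2 {F Rl}.
Arguments Fnot {F Rl}. Arguments Fand {F Rl}. Arguments For {F Rl}. Arguments Fimp {F Rl}.
Arguments Fall {F Rl}. Arguments Fex {F Rl}. Arguments Tadd {F}. Arguments Tmul {F}. Arguments Topp {F}.
Section Aux.
Variables (F Rl : Type).

Definition Dvd (t s : term F) : formula F Rl :=
  Fex 7 (Feq s (Tmul (Tvar 7) t)).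
Definition qt : term F :=
  Tadd T1 (Tmul (Tadd (Tvar 2) (Tvar 5)) (Tvar 4)).
Definition Rf (n : nat) : formula F Rl :=
  Fand (Fnot (Dvd qt (Tvar 6))) (Dvd qt (Tadd (Tvar n) (Topp (Tvar 3)))).
Definition Tot : formula F Rl :=
  Fall 0 (Fimp (FP1 (Tvar 0)) (Fex 2 (Fand (FP2 (Tvar 2)) (Rf 0)))).
Definition Inj : formula F Rl :=
  Fall 0 (Fall 1 (Fall 2 (Fimp (FP1 (Tvar 0)) (Fimp (FP1 (Tvar 1))
        (Fimp (FP2 (Tvar 2)) (Fimp (Rf 0) (Fimp (Rf 1)
           (Feq (Tvar 0) (Tvar 1))))))))).
Definition Psi : formula F Rl :=
  For (Fall 0 (Fimp (FP1 (Tvar 0)) (FP2 (Tvar 0))))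
   (Fex 3 (Fex 4 (Fex 5 (Fex 6 (Fand Tot Inj))))).
End Aux.

Definition Rp (S : idomainType) (e g k d x y : S) : Prop :=
  ~ (exists w, d = w * (1 + (y + k) * g)) /\ exists w, x + - e = w * (1 + (y + k) * g).

Lemma modelsE (S : idomainType) (F Rl : Type)
    (fI : F -> seq S -> S) (rI : Rl -> seq S -> Prop) A B :
  models fI rI A B (Psi F Rl) <->
  (forall x, A x -> B x) \/ exists e g k d,
    (forall x, A x -> exists y, B y /\ Rp e g k d x y) /\
    (forall x x' y, A x -> A x' -> B y -> Rp e g k d x y -> Rp e g k d x' y -> x = x').
Proof. rewrite /models /=. reflexivity. Qed.

Lemma Psi_sentence (F Rl : Type) : sentence (Psi F Rl).
Proof. reflexivity. Qed.

Section Ring.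
Variable S : idomainType.

Definition dv (a b : S) := exists w, b = w * a.

Lemma comax_mul (a b c : S) : comaximal a b -> comaximal a c -> comaximal a (b * c).
Proof.
move=> [u1 [v1 H1]] [u2 [v2 H2]].
exists (u1 * u2 * a + u1 * v2 * c + v1 * b * u2), (v1 * v2).
rewrite -[1]mulr1 -{1}H1 -H2; ring.
Qed.

Lemma comax_prod (a : S) (l : seq S) (M : S -> S) :
  (forall x, x \in l -> comaximal a (M x)) -> comaximal a (\prod_(x <- l) M x).
Proof.
elim: l => [|x l IH] H; first by rewrite big_nil; exists 0, 1; rewrite mul0r add0r mulr1.
rewrite big_cons; apply: comax_mul; first by apply: H; rewrite mem_head.
by apply: IH => y Hy; apply: H; rewrite inE Hy orbT.
Qed.

Lemma dv_prod (l : seq S) (M : S -> S) x : x \in l -> dv (M x) (\prod_(y <- l) M y).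
Proof.
move=> Hx; rewrite (big_rem x Hx) /=; exists (\prod_(y <- rem x l) M y); ring.
Qed.

Lemma crt (l : seq S) (M R : S -> S) : uniq l ->
  (forall x x', x \in l -> x' \in l -> x != x' -> comaximal (M x) (M x')) ->
  exists e, forall x, x \in l -> dv (M x) (R x + - e).
Proof.
elim: l => [|x l IH] /=; first by move=> _ _; exists 0 => y.
move=> /andP [xl ul] H.
have [e' He'] : exists e, forall x, x \in l -> dv (M x) (R x + - e).
  apply: IH => // y y' Hy Hy' Hyy; apply: H => //; by rewrite inE ?Hy ?Hy' orbT.
have [u [v Huv]] : comaximal (M x) (\prod_(y <- l) M y).
  apply: comax_prod => y Hy; apply: H; rewrite ?mem_head ?inE ?Hy ?orbT //.
  by apply/eqP => E; move: xl; rewrite E Hy.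
exists (e' + (R x - e') * v * \prod_(y <- l) M y) => y; rewrite inE => /orP [/eqP ->|Hy].
  exists ((R x - e') * u).
  have E : u * M x = 1 - v * \prod_(y <- l) M y by apply/eqP; rewrite eq_sym subr_eq Huv.
  have -> : (R x - e') * u * M x = (R x - e') * (u * M x) by ring.
  rewrite E; ring.
have [w1 Hw1] := He' y Hy; have [w2 Hw2] := dv_prod M Hy.
exists (w1 - (R x - e') * v * w2).
have -> : R y + - (e' + (R x - e') * v * \prod_(y0 <- l) M y0) =
  (R y + - e') - (R x - e') * v * \prod_(y0 <- l) M y0 by ring.
rewrite Hw1 Hw2; ring.
Qed.

Lemma dv_unit (q d : S) : comaximal d q -> dv q d -> q \is a GRing.unit.
Proof.
move=> [u [v H]] [w Hw]; apply/unitrP; exists (u * w + v).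
by rewrite -H Hw; split; ring.
Qed.

End Ring.

Lemma dv_trans (S : idomainType) (a b c : S) : dv a b -> dv b c -> dv a c.
Proof. move=> [w1 H1] [w2 H2]; exists (w2 * w1); by rewrite H2 H1 mulrA. Qed.

Section Main.
Variables (S : idomainType) (F Rl : Type)
    (fI : F -> seq S -> S) (rI : Rl -> seq S -> Prop).

Lemma psi_card (A B : S -> Prop) : models fI rI A B (Psi F Rl) -> card_le A B.
Proof.
move/modelsE => [H|[e [g [k [d [Ht Hi]]]]]]; first by exists id.
pose f x := epsilon (inhabits x) (fun y => B y /\ Rp e g k d x y).
have Hf : forall x, A x -> B (f x) /\ Rp e g k d x (f x).
  by move=> x Ax; exact: (epsilon_spec (inhabits x) _ (Ht x Ax)).
exists f; split; first by move=> x /Hf [].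
move=> x y Ax Ay E; have [Bx Rx] := Hf x Ax; have [By Ry] := Hf y Ay.
apply: (Hi x y (f x)) => //; by rewrite E.
Qed.

Lemma fin_inj (A B : S -> Prop) : ~ finite_set A -> finite_set B -> ~ card_le A B.
Proof.
move=> nA [t Ht] [f [fAB finj]]; apply: nA.
pose g y := epsilon (inhabits y) (fun x => A x /\ f x = y).
pose b x := if excluded_middle_informative (A x) then true else false.
exists [seq x <- map g t | b x] => x; rewrite mem_filter; split.
  move=> Ax; apply/andP; split.
    by rewrite /b; case: excluded_middle_informative.
  have := epsilon_spec (inhabits (f x)) (fun x0 => A x0 /\ f x0 = f x)
     (ex_intro _ x (conj Ax erefl)) => -[A' E].
  have <- : g (f x) = x by exact: finj _ _ A' Ax E.
  by apply: map_f; apply/Ht; apply: fAB.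
by move=> /andP [+ _]; rewrite /b; case: excluded_middle_informative.
Qed.

Lemma construct (A B : S -> Prop) : infinite_type S -> cond1 S -> cond2 S ->
  finite_set A -> card_le A B -> models fI rI A B (Psi F Rl).
Proof.
move=> Hinf H1 H2 [s Hs] [f [fAB finj]].
apply/modelsE; right.
pose s' := undup s.
have Hs' : forall x, A x <-> x \in s' by move=> x; rewrite mem_undup.
pose P (x : S) := \prod_(x' <- s') (if x == x' then 1 else x - x').
pose d := \prod_(x <- s') P x.
have dne0 : d != 0.
  rewrite prodf_seq_neq0; apply/allP => x _ /=; rewrite ?implyTb prodf_seq_neq0.
  apply/allP => y _ /=; rewrite ?implyTb; case: (x =P y) => [_|/eqP]; first exact: oner_neq0.
  by rewrite subr_eq0.
have ddiv : forall x x', x \in s' -> x' \in s' -> x != x' -> dv (x - x') d.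
  move=> x x' Hx Hx' N; apply: (dv_trans _ (dv_prod P Hx)).
  have := dv_prod (fun x' => if x == x' then 1 else x - x') Hx'.
  by rewrite /= (negbTE N).
have [m [[mne0 mnu] _]] := H1 [::].
have Ha : nonzero_nonunit (d * m).
  split; first by rewrite mulf_neq0.
  by rewrite unitrM negb_and mnu orbT.
have [z zn] := Hinf (map f s').
pose k := - z.
pose zs := map (fun y => y + k) (map f s').
have z0 : 0 \notin zs.
  apply/negP => /mapP [y Hy E]; move: zn; rewrite /k in E.
  have -> : z = y by apply/eqP; rewrite eq_sym -subr_eq0; apply/eqP; rewrite E.
  by rewrite Hy.
have [g [Hg1 Hg2]] := H2 zs (d * m) z0 Ha.
pose M x := 1 + (f x + k) * g.
have Hpw : forall x x', x \in s' -> x' \in s' -> x != x' -> comaximal (M x) (M x').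
  move=> x x' Hx Hx' N; apply: Hg2; [by do 2 apply: map_f|by do 2 apply: map_f|].
  apply/negP => /eqP E; have E2 : f x = f x' by apply: (addIr k).
  move/negP: N; apply; apply/eqP; apply: finj => //; by apply/Hs'.
have [e He] := @crt S s' M id (undup_uniq s) Hpw.
exists e, g, k, d; split.
  move=> x Ax; exists (f x); split; first exact: fAB.
  have xs : x \in s' by apply/Hs'.
  split; last exact: He.
  have [[qne0 qnu] qc] := Hg1 _ (map_f _ (map_f f xs)).
  move=> Hdv; apply: (negP qnu); apply: (dv_unit _ Hdv).
  case: qc => u [v Huv]; exists (u * m), v; rewrite -[RHS]Huv; ring.
move=> x x' y Ax Ax' By [_ [w1 Hw1]] [Hn [w2 Hw2]].
have [//|N] := eqVneq x x'.
exfalso; apply: Hn; apply: (dv_trans _ (ddiv x x' _ _ N)); try by apply/Hs'.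
exists (w1 - w2).
have -> : x - x' = (x + - e) - (x' + - e) by ring.
rewrite Hw1 Hw2; ring.
Qed.
End Main.

Theorem lemma2p6 (S : idomainType) (F Rl : Type)
    (fI : F -> seq S -> S) (rI : Rl -> seq S -> Prop) :
  infinite_type S -> cond1 S -> cond2 S ->
  exists Psi : formula F Rl, sentence Psi /\
    (forall A B : S -> Prop, (forall x, A x -> B x) -> models fI rI A B Psi) /\
    (forall A B : S -> Prop, finite_set A ->
        (models fI rI A B Psi <-> card_le A B)) /\
    (forall A B : S -> Prop, ~ finite_set A -> finite_set B ->
        ~ models fI rI A B Psi).
Proof.
move=> Hinf H1 H2; exists (Psi F Rl); split; first exact: Psi_sentence.
split; first by move=> A B H; apply/modelsE; left.
split.
  move=> A B HA; split; first exact: psi_card.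
  exact: construct.
move=> A B nA fB /psi_card; exact: fin_inj.
Qed.
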